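(* Let $I$ be a nonzero ideal of $\mathbb{Z}[\zeta_{16}+\zeta_{16}^7]$. Then there exists a generator $\alpha'$ of $I$ (i.e. $I=(\alpha')$) which is a shortest nonzero vector of $I$ under the canonical embedding of $\mathbb{Q}(\zeta_{16}+\zeta_{16}^7)$, i.e. $\|\Sigma(\alpha')\|\le\|\Sigma(\gamma)\|$ for every nonzero $\gamma\in I$.
   Context: $\zeta_{16}=e^{2\pi i/16}$; $\mathbb{Q}(\zeta_{16}+\zeta_{16}^7)$ is a degree-4 subfield of $\mathbb{Q}(\zeta_{16})$ whose ring of integers is $\mathbb{Z}[\zeta_{16}+\zeta_{16}^7]$. For a number field $\mathbb{K}$ with complex embeddings $\varphi_1,\dots,\varphi_t$ (all of them), the canonical embedding is $\Sigma_{\mathbb{K}}(x)=(\varphi_1(x),\dots,\varphi_t(x))$ with $\|\Sigma_{\mathbb{K}}(x)\|^2=\sum_j|\varphi_j(x)|^2$. *)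

(* Defs.v *)
From HB Require Import structures.
From mathcomp Require Import all_boot all_order all_algebra all_field.
Set Implicit Arguments. Unset Strict Implicit. Unset Printing Implicit Defensive.
Import Order.TTheory GRing.Theory Num.Theory.
Local Open Scope ring_scope.

(* zeta16 = e^{2 pi i/16}: the 8th root of -1 of minimal nonnegative argument
   (cf. the header of algC.v / numfield.v). *)
Definition zeta16 : algC := 8.-root (-1).

Definition theta_a (a : nat) : algC := zeta16 ^+ a + zeta16 ^+ (7 * a).
Definition theta : algC := theta_a 1.

Definition evalZ (p : {poly int}) (z : algC) : algC := (map_poly intr p).[z].

Definition in_Ztheta (x : algC) : Prop := exists p : {poly int}, x = evalZ p theta.

Definition is_ideal (I : algC -> Prop) : Prop :=
  [/\ forall x, I x -> in_Ztheta x,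
      I 0,
      forall x y, I x -> I y -> I (x + y)
    & forall r x, in_Ztheta r -> I x -> I (r * x)].

(* The complex embeddings of K = Q(theta) are the maps p(theta) |-> p(theta_a)
   for a in {1,3,9,11} (representatives of (Z/16Z)^* / {1,7}).
   Canonical-embedding norm of the element p(theta): *)
Definition canon_norm (p : {poly int}) : algC :=
  sqrtC (\sum_(a <- [:: 1%N; 3%N; 9%N; 11%N]) `|evalZ p (theta_a a)| ^+ 2).

(* Main.v *)
Require Import Defs.
From HB Require Import structures.
From mathcomp Require Import all_boot all_order all_algebra all_field.
From Stdlib Require Import QArith Qround Qminmax Lqa Psatz.
Module Cover.
Local Open Scope Q_scope.

Definition mn (a b : Q) := if Qle_bool a b then a else b.
Definition mx (a b : Q) := if Qle_bool a b then b else a.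
Lemma mn_l a b : mn a b <= a.
Proof. unfold mn; destruct (Qle_bool a b) eqn:E; [lra|]. 
  assert (~ a <= b) by (rewrite <- Qle_bool_iff; congruence). lra. Qed.
Lemma mn_r a b : mn a b <= b.
Proof. unfold mn; destruct (Qle_bool a b) eqn:E; [apply Qle_bool_iff in E; lra|lra]. Qed.
Lemma mx_l a b : a <= mx a b.
Proof. unfold mx; destruct (Qle_bool a b) eqn:E; [apply Qle_bool_iff in E; lra|lra]. Qed.
Lemma mx_r a b : b <= mx a b.
Proof. unfold mx; destruct (Qle_bool a b) eqn:E; [lra|]. 
  assert (~ a <= b) by (rewrite <- Qle_bool_iff; congruence). lra. Qed.

Definition itv := (Q * Q)%type.
Definition inI (x : Q) (I : itv) := fst I <= x /\ x <= snd I.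

Definition isq (I : itv) : itv :=
  let (l,h) := I in
  if Qle_bool l 0 && Qle_bool 0 h then (0, mx (l * l) (h * h))
  else (mn (l * l) (h * h), mx (l * l) (h * h)).
Definition imul (I J : itv) : itv :=
  let (a,b) := I in let (c,d) := J in
  (mn (mn (a * c) (a * d)) (mn (b * c) (b * d)), mx (mx (a * c) (a * d)) (mx (b * c) (b * d))).
Definition iadd (I J : itv) : itv := (fst I + fst J, snd I + snd J).
Definition isc (k : Q) (I : itv) : itv :=
  if Qle_bool 0 k then (k * fst I, k * snd I) else (k * snd I, k * fst I).
Definition msq (I : itv) : Q := mx (fst I * fst I) (snd I * snd I).

Lemma isq_ok x I : inI x I -> inI (x * x) (isq I).
Proof.
  destruct I as [l h]; unfold inI, isq; simpl; intros [H1 H2].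
  destruct (Qle_bool l 0) eqn:E1; destruct (Qle_bool 0 h) eqn:E2; simpl.
  - apply Qle_bool_iff in E1; apply Qle_bool_iff in E2. split; [nra|].
    destruct (Qlt_le_dec x 0).
    + eapply Qle_trans; [|apply mx_l]. nra.
    + eapply Qle_trans; [|apply mx_r]. nra.
  - assert (h < 0) by (assert (~ 0 <= h) by (rewrite <- Qle_bool_iff; congruence); lra).
    split; [eapply Qle_trans; [apply mn_r|]; nra | eapply Qle_trans; [|apply mx_l]; nra].
  - assert (0 < l) by (assert (~ l <= 0) by (rewrite <- Qle_bool_iff; congruence); lra).
    split; [eapply Qle_trans; [apply mn_l|]; nra | eapply Qle_trans; [|apply mx_r]; nra].
  - assert (0 < l) by (assert (~ l <= 0) by (rewrite <- Qle_bool_iff; congruence); lra).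
    split; [eapply Qle_trans; [apply mn_l|]; nra | eapply Qle_trans; [|apply mx_r]; nra].
Qed.

Lemma mul_lin a b x y : a <= x -> x <= b ->
  Qmin (a * y) (b * y) <= x * y /\ x * y <= Qmax (a * y) (b * y).
Abort.

Lemma imul_ok x y I J : inI x I -> inI y J -> inI (x * y) (imul I J).
Proof.
  destruct I as [a b], J as [c d]; unfold inI, imul; simpl; intros [H1 H2] [H3 H4].
  pose proof (mn_l (a * c) (a * d)); pose proof (mn_r (a * c) (a * d));
  pose proof (mn_l (b * c) (b * d)); pose proof (mn_r (b * c) (b * d));
  pose proof (mn_l (mn (a * c) (a * d)) (mn (b * c) (b * d)));
  pose proof (mn_r (mn (a * c) (a * d)) (mn (b * c) (b * d)));
  pose proof (mx_l (a * c) (a * d)); pose proof (mx_r (a * c) (a * d));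
  pose proof (mx_l (b * c) (b * d)); pose proof (mx_r (b * c) (b * d));
  pose proof (mx_l (mx (a * c) (a * d)) (mx (b * c) (b * d)));
  pose proof (mx_r (mx (a * c) (a * d)) (mx (b * c) (b * d))).
  set (m1 := mn (mn (a * c) (a * d)) (mn (b * c) (b * d))) in *.
  set (M1 := mx (mx (a * c) (a * d)) (mx (b * c) (b * d))) in *.
  set (p := mn (a * c) (a * d)) in *. set (p' := mn (b * c) (b * d)) in *.
  set (q := mx (a * c) (a * d)) in *. set (q' := mx (b * c) (b * d)) in *.
  assert (Hl : Qmin (a * y) (b * y) <= x * y /\ x * y <= Qmax (a * y) (b * y)).
  { destruct (Qlt_le_dec y 0).
    - split; [apply Q.min_le_iff; right; nra | apply Q.max_le_iff; left; nra].
    - split; [apply Q.min_le_iff; left; nra | apply Q.max_le_iff; right; nra]. }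
  assert (Ha : Qmin (a * c) (a * d) <= a * y /\ a * y <= Qmax (a * c) (a * d)).
  { destruct (Qlt_le_dec a 0).
    - split; [apply Q.min_le_iff; right; nra | apply Q.max_le_iff; left; nra].
    - split; [apply Q.min_le_iff; left; nra | apply Q.max_le_iff; right; nra]. }
  assert (Hb : Qmin (b * c) (b * d) <= b * y /\ b * y <= Qmax (b * c) (b * d)).
  { destruct (Qlt_le_dec b 0).
    - split; [apply Q.min_le_iff; right; nra | apply Q.max_le_iff; left; nra].
    - split; [apply Q.min_le_iff; left; nra | apply Q.max_le_iff; right; nra]. }
  destruct Hl as [Hl1 Hl2], Ha as [Ha1 Ha2], Hb as [Hb1 Hb2].
  apply Q.min_le_iff in Hl1; apply Q.max_le_iff in Hl2;
  apply Q.min_le_iff in Ha1; apply Q.max_le_iff in Ha2;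
  apply Q.min_le_iff in Hb1; apply Q.max_le_iff in Hb2.
  split.
  - destruct Hl1, Ha1, Hb1; lra.
  - destruct Hl2, Ha2, Hb2; lra.
Qed.

Lemma iadd_ok x y I J : inI x I -> inI y J -> inI (x+y) (iadd I J).
Proof. unfold inI, iadd; simpl; intros; lra. Qed.
Lemma isc_ok k x I : inI x I -> inI (k * x) (isc k I).
Proof. destruct I as [l h]; unfold inI, isc; simpl; intros [H1 H2].
  destruct (Qle_bool 0 k) eqn:E; simpl.
  - apply Qle_bool_iff in E; split; nra.
  - assert (k < 0) by (assert (~ 0 <= k) by (rewrite <- Qle_bool_iff; congruence); lra). split; nra.
Qed.
Lemma msq_ok x I : inI x I -> x * x <= msq I.
Proof. destruct I as [l h]; unfold inI, msq; simpl; intros [H1 H2].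
  pose proof (mx_l (l * l) (h * h)); pose proof (mx_r (l * l) (h * h)).
  destruct (Qlt_le_dec x 0); nra. Qed.

Definition F (p q r s : Q) : Q :=
  let nu := p * p - 2 * (q * q) in let nv := r * r - 2 * (s * s) in
  let n := q * r - p * s in let mn' := p * r - 2 * (q * s) + n in
  nu * nu + 4 * (mn'*mn' + n * n) + 2 * (nv * nv).

Definition box := (itv * itv * itv * itv)%type.
Definition bound (B : box) : Q :=
  match B with (y0,y1,y2,y3) =>
  let nu := iadd (isq y0) (isc (-2) (isq y1)) in
  let nv := iadd (isq y2) (isc (-2) (isq y3)) in
  let n := iadd (imul y1 y2) (isc (-1) (imul y0 y3)) in
  let mn' := iadd (iadd (imul y0 y2) (isc (-2) (imul y1 y3))) n in
  msq nu + 4 * (msq mn' + msq n) + 2 * msq nv end.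

Definition inB (p q r s : Q) (B : box) :=
  match B with (y0,y1,y2,y3) => inI p y0 /\ inI q y1 /\ inI r y2 /\ inI s y3 end.

Lemma bound_ok p q r s B : inB p q r s B -> F p q r s <= bound B.
Proof.
  destruct B as [[[y0 y1] y2] y3]; simpl; intros (H0&H1&H2&H3).
  unfold F.
  assert (Hnu := iadd_ok _ _ _ _ (isq_ok _ _ H0) (isc_ok (-2) _ _ (isq_ok _ _ H1))).
  assert (Hnv := iadd_ok _ _ _ _ (isq_ok _ _ H2) (isc_ok (-2) _ _ (isq_ok _ _ H3))).
  assert (Hn := iadd_ok _ _ _ _ (imul_ok _ _ _ _ H1 H2) (isc_ok (-1) _ _ (imul_ok _ _ _ _ H0 H3))).
  assert (Hm := iadd_ok _ _ _ _ (iadd_ok _ _ _ _ (imul_ok _ _ _ _ H0 H2) (isc_ok (-2) _ _ (imul_ok _ _ _ _ H1 H3))) Hn).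
  apply msq_ok in Hnu; apply msq_ok in Hnv; apply msq_ok in Hn; apply msq_ok in Hm.
  set (A := p * p - 2 * (q * q)) in *.
  set (A' := p * p + -2 * (q * q)) in *.
  assert (EA : A == A') by (unfold A, A'; ring).
  set (B := r * r - 2 * (s * s)) in *.
  set (B' := r * r + -2 * (s * s)) in *.
  assert (EB : B == B') by (unfold B, B'; ring).
  set (C := q * r - p * s) in *.
  set (C' := q * r + -1 * (p * s)) in *.
  assert (EC : C == C') by (unfold C, C'; ring).
  set (D := p * r - 2 * (q * s) + C) in *.
  set (D' := p * r + -2 * (q * s) + C') in *.
  assert (ED : D == D') by (unfold D, D'; rewrite EC; ring).
  rewrite EA EB EC ED. lra.
Qed.

Definition ishift (I : itv) (d : Z) : itv := (fst I - inject_Z d, snd I - inject_Z d).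
Definition vec := (Z * Z * Z * Z)%type.
Definition subd (B : box) (d : vec) : box :=
  match B, d with (y0,y1,y2,y3), (d0,d1,d2,d3) =>
    (ishift y0 d0, ishift y1 d1, ishift y2 d2, ishift y3 d3) end.
Definition TB (B : box) : box :=
  match B with (y0,y1,y2,y3) =>
    (iadd (isc 2 y3) (isc (-2) y2), iadd y2 (isc (-2) y3), y0, y1) end.
Definition midfl (I : itv) : Z := Qfloor ((fst I + snd I) / 2).
Definition cands (B : box) : list vec :=
  match B with (y0,y1,y2,y3) =>
  let b0 := midfl y0 in let b1 := midfl y1 in let b2 := midfl y2 in let b3 := midfl y3 in
  List.flat_map (fun e0 => List.flat_map (fun e1 => List.flat_map (fun e2 => List.map (fun e3 =>
     ((b0+e0)%Z, (b1+e1)%Z, (b2+e2)%Z, (b3+e3)%Z)) (0::1::nil)%Z) (0::1::nil)%Z) (0::1::nil)%Z) (0::1::nil)%Z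
  end.
Definition good (B : box) (d : vec) : bool := negb (Qle_bool 1 (bound (subd B d))).
Fixpoint exb (f : vec -> bool) (l : list vec) : bool :=
  match l with nil => false | a :: l' => if f a then true else exb f l' end.
Definition try (B : box) : bool := exb (good B) (cands B).

Definition half (lo : bool) (I : itv) : itv :=
  let m := Qred ((fst I + snd I) / 2) in if lo then (fst I, m) else (m, snd I).
Definition split (lo : bool) (i : nat) (B : box) : box :=
  match B with (y0,y1,y2,y3) =>
  match i with
  | O => (half lo y0, y1, y2, y3)
  | 1%nat => (y0, half lo y1, y2, y3)
  | 2%nat => (y0, y1, half lo y2, y3)
  | _ => (y0, y1, y2, half lo y3) end end.
Definition nexti (i : nat) : nat := match i with 3%nat => O | _ => S i end.

Fixpoint check (fuel : nat) (i : nat) (B : box) : bool :=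
  if try B then true else if try (TB B) then true else
  match fuel with O => false | S f =>
    if check f (nexti i) (split true i B) then check f (nexti i) (split false i B) else false end.

Definition unitbox : box := ((0,1),(0,1),(0,1),(0,1)).

Lemma check_true : check 24 0 unitbox = true.
Proof. vm_cast_no_check (eq_refl true). Qed.

Lemma exb_ok f l : exb f l = true -> exists a, f a = true.
Proof. induction l as [|a l IH]; simpl; [discriminate|].
  destruct (f a) eqn:E; [eauto|auto]. Qed.

Lemma subd_ok p q r s B d0 d1 d2 d3 : inB p q r s B ->
  inB (p - inject_Z d0) (q - inject_Z d1) (r - inject_Z d2) (s - inject_Z d3) (subd B (d0,d1,d2,d3)).
Proof. destruct B as [[[y0 y1] y2] y3]; unfold inB, subd, ishift, inI; simpl; intros; lra. Qed.

Lemma TB_ok p q r s B : inB p q r s B -> inB (2 * s + -2 * r) (r + -2 * s) p q (TB B).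
Proof. destruct B as [[[y0 y1] y2] y3]; unfold inB, TB; simpl; intros (H0&H1&H2&H3).
  repeat split; try apply H0; try apply H1;
  try (apply iadd_ok; [apply isc_ok|apply isc_ok]; assumption);
  try (apply iadd_ok; [|apply isc_ok]; assumption). Qed.

Lemma good_ok p q r s B d : good B d = true -> inB p q r s B ->
  F (p - inject_Z (fst (fst (fst d)))) (q - inject_Z (snd (fst (fst d))))
    (r - inject_Z (snd (fst d))) (s - inject_Z (snd d)) < 1.
Proof. destruct d as [[[d0 d1] d2] d3]; unfold good; simpl; intros G H.
  apply (subd_ok _ _ _ _ _ d0 d1 d2 d3) in H. apply bound_ok in H.
  destruct (Qle_bool 1 (bound (subd B (d0, d1, d2, d3)))) eqn:E; [discriminate|].
  assert (~ 1 <= bound (subd B (d0, d1, d2, d3))) by (rewrite <- Qle_bool_iff; congruence). lra. Qed.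

Lemma half_ok x I : inI x I -> inI x (half true I) \/ inI x (half false I).
Proof. destruct I as [l h]; unfold inI, half; cbn [fst snd]; intros [H1 H2].
  rewrite !Qred_correct. destruct (Qlt_le_dec x ((l+h)/2)); [left|right]; lra. Qed.

Lemma split_ok p q r s i B : inB p q r s B ->
  inB p q r s (split true i B) \/ inB p q r s (split false i B).
Proof. destruct B as [[[y0 y1] y2] y3]; simpl; intros (H0&H1&H2&H3).
  destruct i as [|[|[|i]]]; simpl.
  - destruct (half_ok _ _ H0); tauto.
  - destruct (half_ok _ _ H1); tauto.
  - destruct (half_ok _ _ H2); tauto.
  - destruct (half_ok _ _ H3); tauto. Qed.

Definition Good (p q r s : Q) := exists d0 d1 d2 d3 : Z,
  F (p - inject_Z d0) (q - inject_Z d1) (r - inject_Z d2) (s - inject_Z d3) < 1 \/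
  F (2 * s + -2 * r - inject_Z d0) (r + -2 * s - inject_Z d1) (p - inject_Z d2) (q - inject_Z d3) < 1.

Lemma check_sound f : forall i B p q r s, check f i B = true -> inB p q r s B -> Good p q r s.
Proof.
  induction f as [|f IH]; intros i B p q r s C H; simpl in C.
  - destruct (try B) eqn:E1.
    + apply exb_ok in E1. destruct E1 as [[[[d0 d1] d2] d3] G].
      exists d0, d1, d2, d3; left. exact (good_ok _ _ _ _ _ _ G H).
    + destruct (try (TB B)) eqn:E2; [|discriminate].
      apply exb_ok in E2. destruct E2 as [[[[d0 d1] d2] d3] G].
      exists d0, d1, d2, d3; right. exact (good_ok _ _ _ _ _ _ G (TB_ok _ _ _ _ _ H)).
  - destruct (try B) eqn:E1.
    + apply exb_ok in E1. destruct E1 as [[[[d0 d1] d2] d3] G].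
      exists d0, d1, d2, d3; left. exact (good_ok _ _ _ _ _ _ G H).
    + destruct (try (TB B)) eqn:E2.
      * apply exb_ok in E2. destruct E2 as [[[[d0 d1] d2] d3] G].
        exists d0, d1, d2, d3; right. exact (good_ok _ _ _ _ _ _ G (TB_ok _ _ _ _ _ H)).
      * destruct (check f (nexti i) (split true i B)) eqn:E3; [|discriminate].
        destruct (split_ok _ _ _ _ i _ H) as [H'|H'].
        -- exact (IH _ _ _ _ _ _ E3 H').
        -- exact (IH _ _ _ _ _ _ C H').
Qed.

Add Morphism F with signature Qeq ==> Qeq ==> Qeq ==> Qeq ==> Qeq as F_morph.
Proof. intros a a' Ha b b' Hb c c' Hc d d' Hd; unfold F; cbv zeta.
  rewrite Ha Hb Hc Hd; reflexivity. Qed.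

Lemma fl_ok x : inI (x - inject_Z (Qfloor x)) (0,1).
Proof. pose proof (Qfloor_le x) as H0; pose proof (Qlt_floor x) as H.
  rewrite inject_Z_plus in H. unfold inI; cbn [fst snd]. change (inject_Z 1) with 1 in H. lra. Qed.

Lemma cover p q r s : Good p q r s.
Proof.
  set (f0 := Qfloor p); set (f1 := Qfloor q); set (f2 := Qfloor r); set (f3 := Qfloor s).
  assert (H : inB (p - inject_Z f0) (q - inject_Z f1) (r - inject_Z f2) (s - inject_Z f3) unitbox).
  { unfold inB, unitbox; repeat split; apply fl_ok. }
  destruct (check_sound _ _ _ _ _ _ _ check_true H) as (d0&d1&d2&d3&[G|G]).
  - exists (f0 + d0)%Z, (f1 + d1)%Z, (f2 + d2)%Z, (f3 + d3)%Z; left.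
    rewrite !inject_Z_plus.
    setoid_replace (p - (inject_Z f0 + inject_Z d0)) with (p - inject_Z f0 - inject_Z d0) by ring.
    setoid_replace (q - (inject_Z f1 + inject_Z d1)) with (q - inject_Z f1 - inject_Z d1) by ring.
    setoid_replace (r - (inject_Z f2 + inject_Z d2)) with (r - inject_Z f2 - inject_Z d2) by ring.
    setoid_replace (s - (inject_Z f3 + inject_Z d3)) with (s - inject_Z f3 - inject_Z d3) by ring.
    exact G.
  - exists (2 * f3 + (-2) * f2 + d0)%Z, (f2 + (-2) * f3 + d1)%Z, (f0 + d2)%Z, (f1 + d3)%Z; right.
    rewrite !inject_Z_plus !inject_Z_mult.
    setoid_replace (2 * s + -2 * r - (inject_Z 2 * inject_Z f3 + inject_Z (-2) * inject_Z f2 + inject_Z d0))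
      with (2 * (s - inject_Z f3) + -2 * (r - inject_Z f2) - inject_Z d0) by (unfold inject_Z; ring).
    setoid_replace (r + -2 * s - (inject_Z f2 + inject_Z (-2) * inject_Z f3 + inject_Z d1))
      with ((r - inject_Z f2) + -2 * (s - inject_Z f3) - inject_Z d1) by (unfold inject_Z; ring).
    setoid_replace (p - (inject_Z f0 + inject_Z d2)) with (p - inject_Z f0 - inject_Z d2) by ring.
    setoid_replace (q - (inject_Z f1 + inject_Z d3)) with (q - inject_Z f1 - inject_Z d3) by ring.
    exact G.
Qed.

Definition FZ (p q r s : Z) : Z :=
  let nu := (p * p - 2 * (q * q))%Z in let nv := (r * r - 2 * (s * s))%Z in
  let n := (q * r - p * s)%Z in let mn' := (p * r - 2 * (q * s) + n)%Z in
  (nu * nu + 4 * (mn' * mn' + n * n) + 2 * (nv * nv))%Z.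

Lemma F_inj (p q r s : Z) :
  F (inject_Z p) (inject_Z q) (inject_Z r) (inject_Z s) == inject_Z (FZ p q r s).
Proof.
unfold F, FZ; cbv zeta. unfold Z.sub.
repeat (rewrite ?inject_Z_plus ?inject_Z_mult ?inject_Z_opp).
change (inject_Z 2) with 2; change (inject_Z 4) with 4. ring.
Qed.

Lemma F_hom k a b c d : F (k * a) (k * b) (k * c) (k * d) == k * k * k * k * F a b c d.
Proof. unfold F; cbv zeta; ring. Qed.

Lemma coverZ (A0 A1 A2 A3 m : Z) : (0 < m)%Z -> exists D0 D1 D2 D3 : Z,
  (FZ (A0 - m * D0) (A1 - m * D1) (A2 - m * D2) (A3 - m * D3) < m * m * m * m)%Z \/
  (FZ (2 * A3 - 2 * A2 - m * D0) (A2 - 2 * A3 - m * D1) (A0 - m * D2) (A1 - m * D3) < m * m * m * m)%Z.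
Proof.
intro Hm.
assert (Hq : ~ inject_Z m == 0).
{ intro H. unfold Qeq in H. simpl in H. lia. }
assert (Hq' : 0 < inject_Z m).
{ unfold Qlt; simpl; lia. }
destruct (cover (inject_Z A0 / inject_Z m) (inject_Z A1 / inject_Z m)
                (inject_Z A2 / inject_Z m) (inject_Z A3 / inject_Z m))
  as (D0 & D1 & D2 & D3 & [H|H]).
- exists D0, D1, D2, D3; left.
  assert (E : forall A D, inject_Z (A - m * D) == inject_Z m * (inject_Z A / inject_Z m - inject_Z D)).
  { intros A D. unfold Z.sub. rewrite inject_Z_plus inject_Z_opp inject_Z_mult. field. exact Hq. }
  assert (G : inject_Z (FZ (A0 - m * D0) (A1 - m * D1) (A2 - m * D2) (A3 - m * D3)) < inject_Z (m * m * m * m)).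
  { rewrite <- F_inj. rewrite (E A0 D0) (E A1 D1) (E A2 D2) (E A3 D3) F_hom.
    rewrite !inject_Z_mult.
    assert (0 < inject_Z m * inject_Z m * inject_Z m * inject_Z m).
    { repeat apply Qmult_lt_0_compat; exact Hq'. }
    match goal with |- ?k * ?v < ?k' =>
      apply (Qlt_le_trans _ (k * 1)); [apply (proj2 (Qmult_lt_l v 1 k H0)); exact H | rewrite Qmult_1_r; apply Qle_refl] end. }
  rewrite <- Zlt_Qlt in G; exact G.
- exists D0, D1, D2, D3; right.
  assert (E1 : forall A D, inject_Z (A - m * D) == inject_Z m * (inject_Z A / inject_Z m - inject_Z D)).
  { intros A D. unfold Z.sub. rewrite inject_Z_plus inject_Z_opp inject_Z_mult. field. exact Hq. }
  match type of H with (F ?a ?b _ _ < _) =>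
  assert (E2 : inject_Z (2 * A3 - 2 * A2 - m * D0) == inject_Z m * a);
  [ unfold Z.sub; rewrite !inject_Z_plus !inject_Z_opp !inject_Z_mult; change (inject_Z 2) with 2; field; exact Hq |];
  assert (E3 : inject_Z (A2 - 2 * A3 - m * D1) == inject_Z m * b);
  [ unfold Z.sub; rewrite !inject_Z_plus !inject_Z_opp !inject_Z_mult; change (inject_Z 2) with 2; field; exact Hq |]
  end.
  assert (G : inject_Z (FZ (2 * A3 - 2 * A2 - m * D0) (A2 - 2 * A3 - m * D1) (A0 - m * D2) (A1 - m * D3)) < inject_Z (m * m * m * m)).
  { rewrite <- F_inj. rewrite E2 E3 (E1 A0 D2) (E1 A1 D3) F_hom.
    rewrite !inject_Z_mult.
    assert (0 < inject_Z m * inject_Z m * inject_Z m * inject_Z m).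
    { repeat apply Qmult_lt_0_compat; exact Hq'. }
    match goal with |- ?k * ?v < ?k' =>
      apply (Qlt_le_trans _ (k * 1)); [apply (proj2 (Qmult_lt_l v 1 k H0)); exact H | rewrite Qmult_1_r; apply Qle_refl] end. }
  rewrite <- Zlt_Qlt in G; exact G.
Qed.
End Cover.

From mathcomp Require Import all_boot all_order all_algebra all_field.
From mathcomp Require Import ring zify ssrZ.
From Stdlib Require Import Classical_Prop.
Import Order.TTheory GRing.Theory Num.Theory.
Local Open Scope ring_scope.

Notation z := zeta16.
Notation th := theta.
Definition th3 : algC := theta_a 3.
Definition cc : algC := th ^+ 2 + 2.

Lemma z8 : z ^+ 8 = -1.
Proof. by rewrite /zeta16 rootCK. Qed.

Lemma modz8 (P Q H : algC) : P - Q = (z ^+ 8 + 1) * H -> P = Q.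
Proof. by rewrite z8 addNr mul0r => /eqP; rewrite subr_eq0 => /eqP. Qed.

Lemma normz : `|z| = 1.
Proof.
apply/eqP; rewrite -(@pexpr_eq1 _ _ 8 isT (normr_ge0 z)).
by rewrite -normrX z8 normrN normr1.
Qed.

Lemma zconj : z^* = z ^+ 15.
Proof.
have zn0 : z != 0 by rewrite -normr_eq0 normz oner_eq0.
apply: (mulfI zn0).
have -> : z * z^* = 1 by rewrite -normCK normz expr1n.
by symmetry; apply: (@modz8 _ _ (-1 + z ^+ 8)); ring.
Qed.

Lemma thE : th = z + z ^+ 7.
Proof. by rewrite /theta /theta_a expr1. Qed.
Lemma th3E' : th3 = z ^+ 3 + z ^+ 21.
Proof. by []. Qed.

Lemma th9 : theta_a 9 = - th.
Proof.
rewrite thE /theta_a /=.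
apply: (@modz8 _ _ (z ^+ 1 + z ^+ 7 - z ^+ 15 + z ^+ 23 - z ^+ 31 + z ^+ 39 - z ^+ 47 + z ^+ 55)); ring.
Qed.

Lemma th11 : theta_a 11 = - th3.
Proof.
rewrite th3E' /theta_a /=.
apply: (@modz8 _ _ (z ^+ 3 + z ^+ 21 - z ^+ 29 + z ^+ 37 - z ^+ 45 + z ^+ 53 - z ^+ 61 + z ^+ 69)); ring.
Qed.

Lemma th3E : th3 = th ^+ 3 + 3 * th.
Proof.
rewrite th3E' thE.
apply: (@modz8 _ _ (- 3 * z - 3 * z ^+ 7)); ring.
Qed.

Lemma cc2 : cc ^+ 2 = 2.
Proof.
rewrite /cc thE.
apply: (@modz8 _ _ (2 + 4 * z ^+ 2 + z ^+ 4 + 6 * z ^+ 8 - z ^+ 12 + 4 * z ^+ 14 + z ^+ 20)); ring.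
Qed.

Lemma thconj : th^* = - th.
Proof.
rewrite thE rmorphD /= rmorphXn /= zconj.
apply: (@modz8 _ _ (z ^+ 1 + z ^+ 7 - z ^+ 9 + z ^+ 17 - z ^+ 25 + z ^+ 33 - z ^+ 41 + z ^+ 49 - z ^+ 57 + z ^+ 65 - z ^+ 73 + z ^+ 81 - z ^+ 89 + z ^+ 97)); ring.
Qed.

Lemma th3conj : th3^* = - th3.
Proof. by rewrite th3E rmorphD /= rmorphXn /= rmorphM /= rmorph_nat thconj; ring. Qed.

Lemma ccconj : cc^* = cc.
Proof. by rewrite /cc rmorphD /= rmorphXn /= thconj rmorph_nat sqrrN. Qed.

Lemma th3sq : th3 ^+ 2 + 2 = - cc.
Proof.
have h : cc ^+ 2 - 2 = 0 by rewrite cc2 subrr.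
apply/eqP; rewrite -subr_eq0 opprK; apply/eqP.
have -> : th3 ^+ 2 + 2 + cc = (cc ^+ 2 - 2) * cc by rewrite th3E /cc; ring.
by rewrite h mul0r.
Qed.

Lemma sqrt2_irr (p q : int) : p ^+ 2 = 2 * q ^+ 2 -> q = 0.
Proof.
move=> h.
have hn : (expn `|p| 2 = 2 * expn `|q| 2)%N.
  by rewrite -!abszX h abszM.
apply/eqP; rewrite -absz_eq0; apply: contraT => q0.
have p0 : (0 < `|p|)%N.
  rewrite lt0n; apply/negP => /eqP p0; move: hn; rewrite p0 => /esym/eqP.
  by rewrite muln_eq0 expn_eq0 /= (negbTE q0).
have := congr1 (logn 2) hn.
rewrite lognM // ?expn_gt0 ?lt0n ?q0 // !lognX (@logn_prime 2 2 isT) /= => e.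
lia.
Qed.

Definition isr (t : algC) := (t ^+ 2 + 2) ^+ 2 = 2.

Definition E (p q r s : int) (t : algC) : algC :=
  p%:~R + q%:~R * (t ^+ 2 + 2) + t * (r%:~R + s%:~R * (t ^+ 2 + 2)).
Definition ep (p q r s : int) : {poly int} :=
  p%:P + q%:P * ('X^2 + 2%:P) + 'X * (r%:P + s%:P * ('X^2 + 2%:P)).

Lemma evalZD p q t : evalZ (p + q) t = evalZ p t + evalZ q t.
Proof. by rewrite /evalZ rmorphD hornerD. Qed.
Lemma evalZM p q t : evalZ (p * q) t = evalZ p t * evalZ q t.
Proof. by rewrite /evalZ rmorphM hornerM. Qed.
Lemma evalZN p t : evalZ (- p) t = - evalZ p t.
Proof. by rewrite /evalZ rmorphN hornerN. Qed.
Lemma evalZB p q t : evalZ (p - q) t = evalZ p t - evalZ q t.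
Proof. by rewrite evalZD evalZN. Qed.
Lemma evalZC c t : evalZ c%:P t = c%:~R.
Proof. by rewrite /evalZ map_polyC hornerC. Qed.
Lemma evalZX t : evalZ 'X t = t.
Proof. by rewrite /evalZ map_polyX hornerX. Qed.
Lemma evalZXn n t : evalZ 'X^n t = t ^+ n.
Proof. by rewrite /evalZ map_polyXn hornerXn. Qed.

Lemma evalZ_ep p q r s t : evalZ (ep p q r s) t = E p q r s t.
Proof.
rewrite /ep /E !(evalZD, evalZM, evalZC, evalZX, evalZXn).
by rewrite expr2.
Qed.

Lemma coordP (f : {poly int}) : exists p q r s : int,
  forall t, isr t -> evalZ f t = E p q r s t.
Proof.
elim/poly_ind: f => [|f k [p [q [r [s IH]]]]].
  by exists 0, 0, 0, 0 => t _; rewrite /evalZ map_poly0 horner0 /E; ring.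
exists (-2 * r + 2 * s + k), (r - 2 * s), p, q => t ht.
rewrite evalZD evalZM evalZX evalZC IH // /E.
have h : (t ^+ 2 + 2) ^+ 2 - 2 = 0 by rewrite ht subrr.
apply/eqP; rewrite -subr_eq0; apply/eqP.
rewrite -(mulr0 s%:~R) -h.
rewrite !(intrD, intrM, intrN) /=; ring.
Qed.

Lemma isr_th : isr th.
Proof. exact: cc2. Qed.
Lemma isr_th3 : isr th3.
Proof. by rewrite /isr th3sq sqrrN cc2. Qed.
Lemma isr_N t : isr t -> isr (- t).
Proof. by rewrite /isr sqrrN. Qed.

Lemma th_neq0 : th != 0.
Proof.
apply/negP => /eqP h; have := cc2; rewrite /cc h expr0n /= add0r => /eqP.
by rewrite -subr_eq0 (_ : 2 ^+ 2 - 2 = 2 :> algC) ?pnatr_eq0 //; ring.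
Qed.
Lemma th3_neq0 : th3 != 0.
Proof.
apply/negP => /eqP h.
have h2 : cc = -2 by rewrite -[cc]opprK -th3sq h expr0n add0r.
have := cc2; rewrite h2 => /eqP; rewrite -subr_eq0 (_ : (-2) ^+ 2 - 2 = 2 :> algC) ?pnatr_eq0 //; ring.
Qed.

Lemma conj_int (k : int) : (k%:~R : algC)^* = k%:~R.
Proof. exact: rmorph_int. Qed.

Lemma conjE t p q r s : t^* = - t ->
  (E p q r s t)^* = p%:~R + q%:~R * (t ^+ 2 + 2) - t * (r%:~R + s%:~R * (t ^+ 2 + 2)).
Proof.
move=> ht.
have hC : (t ^+ 2 + 2)^* = t ^+ 2 + 2 by rewrite rmorphD /= rmorphXn /= ht sqrrN rmorph_nat.
rewrite /E; move: (t ^+ 2 + 2) hC => C hC.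
by rewrite !(rmorphD, rmorphM) /= !conj_int ht hC; ring.
Qed.

Lemma irr2 (a b : int) (c : algC) : c ^+ 2 = 2 -> a%:~R + b%:~R * c = 0 -> a = 0 /\ b = 0.
Proof.
move=> hc h.
have ha : (a%:~R : algC) = - (b%:~R * c) by apply/eqP; rewrite -subr_eq0 opprK h.
have : ((a ^+ 2)%:~R : algC) = (2 * b ^+ 2)%:~R.
  by rewrite !rmorphXn /= rmorphM /= ha sqrrN exprMn hc /=; ring.
move/intr_inj => /sqrt2_irr b0; split => //.
by move: ha; rewrite b0 mul0r oppr0 => /eqP; rewrite intr_eq0 => /eqP.
Qed.

Lemma indep t p q r s : t^* = - t -> t != 0 -> isr t -> E p q r s t = 0 ->
  [/\ p = 0, q = 0, r = 0 & s = 0].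
Proof.
move=> ht t0 hr h0.
set C := t ^+ 2 + 2.
set U := p%:~R + q%:~R * C; set V := r%:~R + s%:~R * C.
have e1 : U + t * V = 0 by rewrite -h0.
have e2 : U - t * V = 0 by rewrite -(@conjE t p q r s ht) h0 rmorph0.
have hU : U = 0.
  have : 2 * U = 0 by rewrite -[RHS](addr0 0) -{1}e1 -e2; ring.
  by move/eqP; rewrite mulf_eq0 pnatr_eq0 /= => /eqP.
have hV : V = 0.
  by move: e1; rewrite hU add0r => /eqP; rewrite mulf_eq0 (negbTE t0) /= => /eqP.
have [p0 q0] := @irr2 p q C hr hU. have [r0 s0] := @irr2 r s C hr hV. by [].
Qed.

Lemma wd f g : evalZ f th = evalZ g th -> forall t, isr t -> evalZ f t = evalZ g t.
Proof.
move=> h t ht; have [p [q [r [s hc]]]] := coordP (f - g).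
have : E p q r s th = 0 by rewrite -(hc th isr_th) evalZB h subrr.
case/(@indep th p q r s thconj th_neq0 isr_th) => p0 q0 r0 s0.
apply/eqP; rewrite -subr_eq0 -evalZB (hc t ht) p0 q0 r0 s0 /E; apply/eqP; ring.
Qed.

Lemma wd3 f : evalZ f th3 = 0 -> evalZ f th = 0.
Proof.
move=> h; have [p [q [r [s hc]]]] := coordP f.
have : E p q r s th3 = 0 by rewrite -(hc th3 isr_th3).
case/(@indep th3 p q r s th3conj th3_neq0 isr_th3) => p0 q0 r0 s0.
by rewrite (hc th isr_th) p0 q0 r0 s0 /E; ring.
Qed.

Lemma evalZ_conj f t : evalZ f t^* = (evalZ f t)^*.
Proof.
rewrite /evalZ -horner_map /=; congr (_.[_]).
rewrite -map_poly_comp; apply: eq_map_poly => k /=; by rewrite conj_int.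
Qed.

Definition n1 f := `|evalZ f th| ^+ 2.
Definition n3 f := `|evalZ f th3| ^+ 2.
Definition NN f := n1 f * n3 f.
Definition SS f := n1 f + n3 f.
Definition Aq (p q r s : int) : int := p ^+ 2 + 2 * q ^+ 2 + 2 * r ^+ 2 + 4 * s ^+ 2 - 4 * r * s.
Definition Bq (p q r s : int) : int := 2 * p * q - r ^+ 2 - 2 * s ^+ 2 + 4 * r * s.
Definition Nq (p q r s : int) : int := Aq p q r s ^+ 2 - 2 * Bq p q r s ^+ 2.

Lemma nE t p q r s : t^* = - t -> isr t ->
  `|E p q r s t| ^+ 2 = (Aq p q r s)%:~R + (Bq p q r s)%:~R * (t ^+ 2 + 2).
Proof.
move=> ht hr; rewrite normCK (@conjE t p q r s ht).
have -> : E p q r s t * (p%:~R + q%:~R * (t ^+ 2 + 2) - t * (r%:~R + s%:~R * (t ^+ 2 + 2)))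
  = (p%:~R + q%:~R * (t ^+ 2 + 2)) ^+ 2 - t ^+ 2 * (r%:~R + s%:~R * (t ^+ 2 + 2)) ^+ 2.
  by rewrite /E; ring.
have ht2 : t ^+ 2 = (t ^+ 2 + 2) - 2 by rewrite addrK.
rewrite {2}ht2; move: hr; rewrite /isr; move: (t ^+ 2 + 2) => C hC.
have h0 : C ^+ 2 - 2 = 0 by rewrite hC subrr.
apply/eqP; rewrite -subr_eq0; apply/eqP.
rewrite -(mulr0 (2 * s%:~R ^+ 2 - s%:~R ^+ 2 * C - 2 * r%:~R * s%:~R + q%:~R ^+ 2)) -h0.
rewrite /Aq /Bq !(intrD, intrM, intrN, rmorphXn) /=; ring.
Qed.

Lemma coordN f : exists p q r s : int,
  [/\ n1 f = (Aq p q r s)%:~R + (Bq p q r s)%:~R * cc,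
      n3 f = (Aq p q r s)%:~R - (Bq p q r s)%:~R * cc
    & forall t, isr t -> evalZ f t = E p q r s t].
Proof.
have [p [q [r [s hc]]]] := coordP f.
exists p, q, r, s; split => //.
  by rewrite /n1 (hc th isr_th) (@nE th p q r s thconj isr_th).
by rewrite /n3 (hc th3 isr_th3) (@nE th3 p q r s th3conj isr_th3) th3sq mulrN.
Qed.

Lemma NN_int f : exists p q r s : int, NN f = (Nq p q r s)%:~R /\
  (forall t, isr t -> evalZ f t = E p q r s t).
Proof.
have [p [q [r [s [h1 h3 hc]]]]] := coordN f.
exists p, q, r, s; split => //.
rewrite /NN h1 h3 /Nq; move: (Aq p q r s) (Bq p q r s) => a b.
have h0 : cc ^+ 2 - 2 = 0 by rewrite cc2 subrr.
apply/eqP; rewrite -subr_eq0; apply/eqP.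
rewrite -(mulr0 (- (b%:~R ^+ 2) : algC)) -h0.
rewrite !(intrD, intrM, intrN, rmorphXn) /=; ring.
Qed.

Lemma SS_int f : exists p q r s : int, SS f = (2 * Aq p q r s)%:~R.
Proof.
have [p [q [r [s [h1 h3 hc]]]]] := coordN f.
by exists p, q, r, s; rewrite /SS h1 h3 intrM; ring.
Qed.

Lemma n1_ge0 f : 0 <= n1 f. Proof. by rewrite /n1 exprn_ge0. Qed.
Lemma n3_ge0 f : 0 <= n3 f. Proof. by rewrite /n3 exprn_ge0. Qed.
Lemma NN_ge0 f : 0 <= NN f. Proof. by rewrite /NN mulr_ge0 ?n1_ge0 ?n3_ge0. Qed.
Lemma SS_ge0 f : 0 <= SS f. Proof. by rewrite /SS addr_ge0 ?n1_ge0 ?n3_ge0. Qed.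

Lemma n1M f g : n1 (f * g) = n1 f * n1 g.
Proof. by rewrite /n1 evalZM normrM exprMn. Qed.
Lemma n3M f g : n3 (f * g) = n3 f * n3 g.
Proof. by rewrite /n3 evalZM normrM exprMn. Qed.
Lemma NNM f g : NN (f * g) = NN f * NN g.
Proof. by rewrite /NN n1M n3M; ring. Qed.

Lemma n_wd f g : evalZ f th = evalZ g th -> n1 f = n1 g /\ n3 f = n3 g.
Proof. by move=> h; rewrite /n1 /n3 h (@wd f g h th3 isr_th3). Qed.
Lemma NN_wd f g : evalZ f th = evalZ g th -> NN f = NN g.
Proof. by case/n_wd => h1 h3; rewrite /NN h1 h3. Qed.
Lemma SS_wd f g : evalZ f th = evalZ g th -> SS f = SS g.
Proof. by case/n_wd => h1 h3; rewrite /SS h1 h3. Qed.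

Lemma NN_gt0 f : evalZ f th != 0 -> 0 < NN f.
Proof.
move=> h; rewrite /NN /n1 /n3 mulr_gt0 // exprn_gt0 // normr_gt0 //.
by apply/negP => /eqP/wd3/eqP; rewrite (negbTE h).
Qed.

Lemma NN_eq0 f : evalZ f th = 0 -> NN f = 0.
Proof. by move=> h; rewrite /NN /n1 h normr0 expr0n mul0r. Qed.

Lemma n_C (k : int) : n1 k%:P = (k ^+ 2)%:~R /\ n3 k%:P = (k ^+ 2)%:~R.
Proof.
rewrite /n1 /n3 !evalZC -normrX rmorphXn /= ger0_norm //.
by rewrite -rmorphXn /= ler0z exprn_even_ge0.
Qed.

Lemma NN_C (k : int) : NN k%:P = (k ^+ 4)%:~R.
Proof. by have [h1 h3] := n_C k; rewrite /NN h1 h3 -rmorphM /= -exprD. Qed.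

Lemma canonE f : canon_norm f = sqrtC (SS f + SS f).
Proof.
rewrite /canon_norm !big_cons big_nil addr0 -/theta -/th3 th9 th11.
rewrite -thconj -th3conj !evalZ_conj !norm_conjC /SS /n1 /n3; congr sqrtC; ring.
Qed.

Lemma canon_le f g : SS f <= SS g -> canon_norm f <= canon_norm g.
Proof.
move=> h; rewrite !canonE ler_sqrtC ?nnegrE ?addr_ge0 ?SS_ge0 ?n1_ge0 ?n3_ge0 //; exact: lerD.
Qed.

Lemma transfer (a0 a1 a2 a3 M : int) : 0 < M -> exists d0 d1 d2 d3 : int,
  Nq (a0 - M * d0) (a1 - M * d1) (a2 - M * d2) (a3 - M * d3) < M ^+ 4 \/
  Nq (2 * a3 - 2 * a2 - M * d0) (a2 - 2 * a3 - M * d1) (a0 - M * d2) (a1 - M * d3) < M ^+ 4.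
Proof.
move=> hM; have hm : Z.lt Z0 (Z_of_int M) by lia.
have [D0 [D1 [D2 [D3 H]]]] := Cover.coverZ (Z_of_int a0) (Z_of_int a1) (Z_of_int a2) (Z_of_int a3) (Z_of_int M) hm.
exists (int_of_Z D0), (int_of_Z D1), (int_of_Z D2), (int_of_Z D3).
move: H; rewrite -[D0]int_of_ZK -[D1]int_of_ZK -[D2]int_of_ZK -[D3]int_of_ZK.
move: (int_of_Z D0) (int_of_Z D1) (int_of_Z D2) (int_of_Z D3) => d0 d1 d2 d3.
rewrite /Cover.FZ /Nq /Aq /Bq => -[H|H]; [left|right]; lia.
Qed.

Lemma E_lin p q r s p' q' r' s' t :
  E p q r s t - E p' q' r' s' t = E (p - p') (q - q') (r - r') (s - s') t.
Proof. by rewrite /E !intrB; ring. Qed.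

Lemma E_inj p q r s p' q' r' s' : E p q r s th = E p' q' r' s' th ->
  [/\ p = p', q = q', r = r' & s = s'].
Proof.
move=> h; have : E (p - p') (q - q') (r - r') (s - s') th = 0 by rewrite -E_lin h subrr.
case/(@indep th _ _ _ _ thconj th_neq0 isr_th) => /eqP; rewrite subr_eq0 => /eqP ->.
by move=> /eqP; rewrite subr_eq0 => /eqP -> /eqP; rewrite subr_eq0 => /eqP -> /eqP; rewrite subr_eq0 => /eqP ->.
Qed.

Lemma NN_coords f p q r s : evalZ f th = E p q r s th -> NN f = (Nq p q r s)%:~R.
Proof.
move=> h; have [p' [q' [r' [s' [hN hc]]]]] := NN_int f.
by have [-> -> -> ->] := @E_inj _ _ _ _ _ _ _ _ (etrans (esym h) (hc th isr_th)).
Qed.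

Lemma evalZ_comp b h t : evalZ (b \Po h) t = evalZ b (evalZ h t).
Proof. by rewrite /evalZ map_comp_poly horner_comp. Qed.

Definition tpoly : {poly int} := 'X^3 + 3%:P * 'X.
Definition bstar (b : {poly int}) : {poly int} :=
  (b \Po (- 'X)) * (b \Po tpoly) * (b \Po (- tpoly)).

Lemma evalZ_tpoly : evalZ tpoly th = th3.
Proof. by rewrite /tpoly evalZD evalZM evalZXn evalZX evalZC th3E. Qed.

Lemma bstar_th b : evalZ b th * evalZ (bstar b) th = NN b.
Proof.
rewrite /bstar !evalZM !evalZ_comp evalZN evalZX evalZN evalZ_tpoly.
rewrite -thconj -th3conj !evalZ_conj /NN /n1 /n3 !normCK; ring.
Qed.

Lemma NN_Mi b : evalZ b th != 0 -> exists Mi : int, NN b = Mi%:~R /\ 0 < Mi.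
Proof.
move=> hb; have [p [q [r [s [hN _]]]]] := NN_int b.
exists (Nq p q r s); split => //; by rewrite -(ltr0z algC) -hN NN_gt0.
Qed.

Lemma euclid g b : evalZ b th != 0 ->
  exists d, NN (g - b * d) < NN b \/ NN ('X * g - b * d) < NN b.
Proof.
move=> hb; have [Mi [hM Mpos]] := NN_Mi b hb.
have [a0 [a1 [a2 [a3 hx]]]] := coordP (g * bstar b).
have [d0 [d1 [d2 [d3 hd]]]] := transfer a0 a1 a2 a3 Mi Mpos.
exists (ep d0 d1 d2 d3).
have hbs := bstar_th b; rewrite hM /bstar !evalZM in hbs.
have Mi4 : 0 < (Mi ^+ 4)%:~R :> algC by rewrite ltr0z exprn_gt0.
have key : forall (h w : {poly int}) (p q r s : int),
    evalZ (b * w) th = evalZ (Mi%:P * h) th -> evalZ w th = E p q r s th ->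
    Nq p q r s < Mi ^+ 4 -> NN h < NN b.
  move=> h w p q r s e1 e2 e3.
  have := @NN_wd _ _ e1; rewrite !NNM NN_C hM (@NN_coords _ _ _ _ _ e2) => e4.
  rewrite -(ltr_pM2l Mi4) -e4 -!rmorphM /= ltr_int.
  by rewrite [X in _ < X]mulrC ltr_pM2l.
case: hd => hd; [left|right].
- apply: (key _ (g * bstar b - Mi%:P * ep d0 d1 d2 d3) _ _ _ _ _ _ hd).
    rewrite !(evalZM, evalZB, evalZC) -hbs; ring.
  rewrite evalZB (hx th isr_th) evalZM evalZC evalZ_ep /E !intrB !intrM; ring.
- apply: (key _ ('X * (g * bstar b) - Mi%:P * ep d0 d1 d2 d3) _ _ _ _ _ _ hd).
    rewrite !(evalZM, evalZB, evalZC, evalZX) -hbs; ring.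
  rewrite evalZB evalZM evalZX (hx th isr_th) evalZM evalZC evalZ_ep /E !intrB !intrM.
  have h0 : cc ^+ 2 - 2 = 0 by rewrite cc2 subrr.
  rewrite -/cc; apply/eqP; rewrite -subr_eq0; apply/eqP.
  rewrite -(mulr0 (a3%:~R : algC)) -h0 /cc; ring.
Qed.

Definition inO (x : algC) := exists p : {poly int}, x = evalZ p th.

Lemma inO_add {x y} : inO x -> inO y -> inO (x + y).
Proof. by case=> p -> [q ->]; exists (p + q); rewrite evalZD. Qed.
Lemma inO_mul {x y} : inO x -> inO y -> inO (x * y).
Proof. by case=> p -> [q ->]; exists (p * q); rewrite evalZM. Qed.
Lemma inO_int (k : int) : inO k%:~R.
Proof. by exists k%:P; rewrite evalZC. Qed.
Lemma inO_th : inO th.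
Proof. by exists 'X; rewrite evalZX. Qed.
Lemma inO_opp {x} : inO x -> inO (- x).
Proof. by move=> h; rewrite -mulN1r; apply: inO_mul => //; apply: (inO_int (-1)). Qed.
Lemma inO_thX n : inO (th ^+ n).
Proof. by exists 'X^n; rewrite evalZXn. Qed.
Lemma inO_cc : inO cc.
Proof. by exists ('X^2 + 2%:P); rewrite /cc evalZD evalZXn evalZC. Qed.
Lemma inO_u : inO (- (th ^+ 3 + 4 * th)).
Proof. by exists (- ('X^3 + 4%:P * 'X)); rewrite evalZN evalZD evalZXn evalZM evalZC evalZX. Qed.
Lemma inO_E p q r s : inO (E p q r s th).
Proof. by exists (ep p q r s); rewrite evalZ_ep. Qed.

Section Ideal.
Variable I : algC -> Prop.
Hypothesis hI : is_ideal I.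

Lemma I_inO {x} : I x -> inO x. Proof. by case: hI => h _ _ _; apply: h. Qed.
Lemma I_0 : I 0. Proof. by case: hI. Qed.
Lemma I_add {x y} : I x -> I y -> I (x + y). Proof. by case: hI => _ _ h _; apply: h. Qed.
Lemma I_mul {r x} : inO r -> I x -> I (r * x). Proof. by case: hI => _ _ _ h; apply: h. Qed.
Lemma I_opp {x} : I x -> I (- x).
Proof. by move=> h; rewrite -mulN1r; apply: I_mul => //; apply: (inO_int (-1)). Qed.
Lemma I_mulr {x r} : I x -> inO r -> I (x * r). Proof. by move=> h1 h2; rewrite mulrC; apply: I_mul. Qed.

Lemma ex_min (P : nat -> Prop) : (exists n, P n) -> exists n, P n /\ forall m, P m -> (n <= m)%N.
Proof.
move=> [n Pn].
case: (classic (exists n, P n /\ forall m, P m -> (n <= m)%N)) => // H; exfalso.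
suff: forall k m, (m <= k)%N -> ~ P m by move/(_ n n (leqnn n)).
elim=> [|k IH] m hm Pm.
  apply: H; exists m; split => // m' _; move: hm; rewrite leqn0 => /eqP ->; done.
apply: H; exists m; split => // m' Pm'; rewrite leqNgt; apply/negP => lt.
by apply: (IH m') => //; rewrite -ltnS (leq_trans lt hm).
Qed.

Lemma NN_nat p : exists n : nat, NN p = n%:R.
Proof.
have [a [b [c [d [h _]]]]] := NN_int p.
exists `|Nq a b c d|%N; rewrite h -[X in _ = X]/(((`|Nq a b c d|%N : int))%:~R) gez0_abs //.
by rewrite -(ler0z algC) -h NN_ge0.
Qed.

Hypothesis hnz : exists x, I x /\ x != 0.

Lemma min_elt : exists pb : {poly int}, [/\ I (evalZ pb th), evalZ pb th != 0 &
  forall g : {poly int}, I (evalZ g th) -> evalZ g th != 0 -> NN pb <= NN g].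
Proof.
pose P n := exists p, [/\ I (evalZ p th), evalZ p th != 0 & NN p = n%:R].
have : exists n, P n.
  case: hnz => x [Ix x0]; case: (I_inO Ix) => p hp.
  have [n hn] := NN_nat p; exists n, p; split => //; by rewrite -hp.
case/ex_min => n [[pb [h1 h2 h3]] hmin].
exists pb; split => // g Ig g0.
have [m hm] := NN_nat g.
rewrite h3 hm ler_nat; apply: hmin; by exists g.
Qed.

Lemma key_div pb : I (evalZ pb th) -> evalZ pb th != 0 ->
  (forall g : {poly int}, I (evalZ g th) -> evalZ g th != 0 -> NN pb <= NN g) ->
  forall x, I x -> exists y, inO y /\ (x = evalZ pb th * y \/ th * x = evalZ pb th * y).
Proof.
move=> Ib b0 hmin x Ix; case: (I_inO Ix) => g hg.
have [d [hd|hd]] := euclid g pb b0.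
- exists (evalZ d th); split; first by exists d.
  left; apply/eqP; rewrite -subr_eq0; apply: contraT => ne.
  have Ie : I (evalZ (g - pb * d) th).
    by rewrite evalZB evalZM -hg; apply: I_add => //; apply: I_opp; apply: I_mulr => //; exists d.
  have := hmin _ Ie; rewrite evalZB evalZM -hg => /(_ ne).
  by move=> h; have := lt_le_trans hd h; rewrite ltxx.
- exists (evalZ d th); split; first by exists d.
  right; apply/eqP; rewrite -subr_eq0; apply: contraT => ne.
  have Ie : I (evalZ ('X * g - pb * d) th).
    rewrite evalZB !evalZM evalZX -hg; apply: I_add; first by apply: I_mul => //; exact: inO_th.
    by apply: I_opp; apply: I_mulr => //; exists d.
  have := hmin _ Ie; rewrite evalZB !evalZM evalZX -hg => /(_ ne).
  by move=> h; have := lt_le_trans hd h; rewrite ltxx.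
Qed.

Lemma two_th : (2 : algC) = th * (- (th ^+ 3 + 4 * th)).
Proof.
have h : cc ^+ 2 - 2 = 0 by rewrite cc2 subrr.
apply/eqP; rewrite -subr_eq0; apply/eqP; rewrite -h /cc; ring.
Qed.

Lemma principal : exists a : algC, [/\ inO a, I a &
  forall x, I x <-> exists y, inO y /\ x = a * y].
Proof.
have [pb [Ib b0 hmin]] := min_elt.
have kd := key_div pb Ib b0 hmin.
set b := evalZ pb th in Ib b0 kd *.
case: (classic (forall x, I x -> exists y, inO y /\ x = b * y)) => hA.
  exists b; split => //; first by exists pb.
  move=> x; split; first exact: hA.
  by case=> y [Oy ->]; apply: I_mulr.
have [x0 [Ix0 hx0]] : exists x0, I x0 /\ ~ exists y, inO y /\ x0 = b * y.
  apply: NNPP => hn; apply: hA => x Ix; apply: NNPP => hx; apply: hn; by exists x.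
have [d0 [Od0 [e0|e0]]] := kd x0 Ix0.
  by exfalso; apply: hx0; exists d0.
case: Od0 => pd hpd; have [p [q [r [s hc]]]] := coordP pd.
have hd0 : d0 = (p + 2 * q)%:~R + th * (q%:~R * th + r%:~R + s%:~R * cc).
  by rewrite hpd (hc th isr_th) /E /cc intrD intrM; ring.
have [j hj] : exists j : int, p + 2 * q = 2 * j \/ p + 2 * q = 2 * j + 1.
  exists ((p + 2 * q) %/ 2)%Z; have := divz_eq (p + 2 * q) 2.
  have : ((p + 2 * q) %% 2)%Z = 0 \/ ((p + 2 * q) %% 2)%Z = 1.
    have := modz_ge0 (p + 2 * q) (isT : (2 : int) != 0).
    have := ltz_pmod (p + 2 * q) (isT : (0 : int) < 2). lia.
  by case=> ->; [rewrite addr0 => e; left | move=> e; right]; rewrite {1}e mulrC.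
set w0 : algC := q%:~R * th + r%:~R + s%:~R * cc.
have Ow0 : inO w0.
  rewrite /w0; exact: inO_add (inO_add (inO_mul (inO_int q) inO_th) (inO_int r)) (inO_mul (inO_int s) inO_cc).
case: hj => hj.
  exfalso; apply: hx0; exists (j%:~R * (- (th ^+ 3 + 4 * th)) + w0); split.
    exact: inO_add (inO_mul (inO_int j) inO_u) Ow0.
  apply: (mulfI th_neq0); rewrite e0 hd0 -/w0 hj intrM /= (_ : (2%:~R : algC) = 2) // two_th; ring.
set w := j%:~R * (- (th ^+ 3 + 4 * th)) + w0.
have Ow : inO w.
  exact: inO_add (inO_mul (inO_int j) inO_u) Ow0.
have hd1 : d0 = 1 + th * w by rewrite hd0 -/w0 hj intrD intrM /= (_ : (2%:~R : algC) = 2) // two_th /w; ring.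
set a := x0 - b * w.
have Ia : I a by apply: I_add => //; apply: I_opp; apply: I_mulr.
have hab : b = th * a.
  apply/eqP; rewrite -subr_eq0; apply/eqP.
  by rewrite /a mulrBr e0 hd1; ring.
exists a; split => //; first exact: I_inO.
move=> x; split.
  move=> Ix; have [y [Oy [e|e]]] := kd x Ix.
    exists (th * y); split; first by apply: inO_mul => //; exact: inO_th.
    by rewrite e hab; ring.
  exists y; split => //; apply: (mulfI th_neq0); by rewrite e hab; ring.
by case=> y [Oy ->]; apply: I_mulr.
Qed.

End Ideal.

Lemma ring_mod (c A B K : algC) : c ^+ 2 = 2 -> A - B = K * (c ^+ 2 - 2) -> A = B.
Proof. by move=> hc; rewrite hc subrr mulr0 => /eqP; rewrite subr_eq0 => /eqP. Qed.

Lemma ineq (w1 w3 e1 e3 c : algC) : 0 <= w1 -> 0 <= w3 -> 0 <= e1 -> 0 <= e3 ->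
  c ^+ 2 = 2 -> 2 <= e1 * e3 ->
  w1 + w3 <= w1 * (c + 1) ^+ 2 + w3 * (1 - c) ^+ 2 ->
  w1 + w3 <= w1 * (c - 1) ^+ 2 + w3 * (c + 1) ^+ 2 ->
  w1 + w3 <= w1 * e1 + w3 * e3.
Proof.
move=> w1p w3p e1p e3p hc he hX hY.
rewrite -subr_ge0 in hX; rewrite -subr_ge0 in hY.
have hXY := mulr_ge0 hX hY.
have eXY : (w1 * (c + 1) ^+ 2 + w3 * (1 - c) ^+ 2 - (w1 + w3)) *
           (w1 * (c - 1) ^+ 2 + w3 * (c + 1) ^+ 2 - (w1 + w3))
         = 24 * (w1 * w3) - 4 * (w1 ^+ 2 + w3 ^+ 2).
  apply: (@ring_mod c _ _ (- 2 * w3 ^+ 2 + w3 ^+ 2 * c ^+ 2 + 12 * w1 * w3 + 2 * w1 * w3 * c ^+ 2 - 2 * w1 ^+ 2 + w1 ^+ 2 * c ^+ 2)) => //.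
  ring.
rewrite eXY in hXY.
have hR : (w1 + w3) ^+ 2 <= 8 * (w1 * w3).
  rewrite -subr_ge0; have -> : 8 * (w1 * w3) - (w1 + w3) ^+ 2 = (24 * (w1 * w3) - 4 * (w1 ^+ 2 + w3 ^+ 2)) / 4.
    by field.
  by rewrite divr_ge0 // ler0n.
have hL : 8 * (w1 * w3) <= (w1 * e1 + w3 * e3) ^+ 2.
  rewrite -subr_ge0.
  have -> : (w1 * e1 + w3 * e3) ^+ 2 - 8 * (w1 * w3) =
     (w1 * e1 - w3 * e3) ^+ 2 + 4 * (w1 * w3) * (e1 * e3 - 2) by ring.
  apply: addr_ge0.
    rewrite -realEsqr; apply: rpredB; apply: ger0_real; exact: mulr_ge0.
  apply: mulr_ge0; first by apply: mulr_ge0 => //; apply: mulr_ge0.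
  by rewrite subr_ge0.
rewrite -ler_sqr ?nnegrE; first exact: le_trans hR hL.
  by apply: addr_ge0.
by apply: addr_ge0; apply: mulr_ge0.
Qed.

Lemma cc_real : cc \is Num.real.
Proof. by rewrite CrealE ccconj. Qed.

Definition epoly : {poly int} := 'X^2 + 3%:P.
Definition einv : {poly int} := 'X^2 + 1.

Lemma evalZ1 t : evalZ 1 t = 1.
Proof. by rewrite /evalZ rmorph1 hornerC. Qed.

Lemma epoly_th : evalZ epoly th = cc + 1.
Proof. by rewrite /epoly evalZD evalZXn evalZC /cc; ring. Qed.
Lemma einv_th : evalZ einv th = cc - 1.
Proof. by rewrite /einv evalZD evalZXn evalZ1 /cc; ring. Qed.

Lemma n_epoly : n1 epoly = (cc + 1) ^+ 2 /\ n3 epoly = (1 - cc) ^+ 2.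
Proof.
rewrite /n1 /n3 epoly_th /epoly evalZD evalZXn evalZC.
have -> : th3 ^+ 2 + 3%:~R = 1 - cc by rewrite -[th3 ^+ 2](addrK 2) th3sq; ring.
split; apply: real_normK; [apply: rpredD | apply: rpredB]; rewrite ?rpred1 ?cc_real //.
Qed.

Lemma n_einv : n1 einv = (cc - 1) ^+ 2 /\ n3 einv = (cc + 1) ^+ 2.
Proof.
rewrite /n1 /n3 einv_th /einv evalZD evalZXn evalZ1.
have -> : th3 ^+ 2 + 1 = - (cc + 1) by rewrite -[th3 ^+ 2](addrK 2) th3sq; ring.
rewrite normrN; split; apply: real_normK; [apply: rpredB | apply: rpredD]; rewrite ?rpred1 ?cc_real //.
Qed.

Definition Gen (I : algC -> Prop) (p : {poly int}) :=
  forall x, I x <-> exists q : {poly int}, x = evalZ p th * evalZ q th.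

Lemma Gen_unit I p u v : is_ideal I -> Gen I p -> evalZ u th * evalZ v th = 1 -> Gen I (p * u).
Proof.
move=> hI hp huv x; split.
  move/hp => [q ->]; exists (v * q); rewrite !evalZM.
  by rewrite -[LHS]mulr1 -huv; ring.
case=> q ->; apply/hp; exists (u * q); rewrite !evalZM; ring.
Qed.

Lemma SS_nat p : exists n : nat, SS p = n%:R.
Proof.
have [a [b [c [d h]]]] := SS_int p.
exists `|(2 * Aq a b c d)%R|%N; rewrite h -[X in _ = X]/(((`|(2 * Aq a b c d)%R|%N : int))%:~R) gez0_abs //.
by rewrite -(ler0z algC) -h SS_ge0.
Qed.

Theorem theorem8 (I : algC -> Prop) :
  is_ideal I -> (exists x, I x /\ x != 0) ->
  exists p : {poly int},
    (forall x, I x <-> exists q : {poly int}, x = evalZ p theta * evalZ q theta) /\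
    (forall (gamma : algC) (q : {poly int}),
        I gamma -> gamma != 0 -> gamma = evalZ q theta ->
        canon_norm p <= canon_norm q).
Proof.
move=> hI hnz.
have [a [[pa hpa] Ia ha]] := principal I hI hnz.
have Gpa : Gen I pa.
  move=> x; rewrite ha; split.
    by case=> y [[q ->] ->]; exists q; rewrite hpa.
  by case=> q ->; exists (evalZ q th); split; [exists q | rewrite hpa].
pose P n := exists p, Gen I p /\ SS p = n%:R.
have : exists n, P n by have [n hn] := SS_nat pa; exists n, pa.
case/ex_min => n [[p0 [G0 hS0]] hmin].
have min0 : forall p, Gen I p -> SS p0 <= SS p.
  move=> p Gp; have [m hm] := SS_nat p; rewrite hS0 hm ler_nat; apply: hmin; by exists p.
exists p0; split => // gamma q Ig g0 hq.
apply: canon_le.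
have [dq hdq] : exists dq, gamma = evalZ p0 th * evalZ dq th by apply/G0.
have e1 : evalZ q th = evalZ (p0 * dq) th by rewrite evalZM -hdq -hq.
rewrite (@SS_wd _ _ e1).
have d0 : evalZ dq th != 0 by apply: contraNneq g0 => h; rewrite hdq h mulr0.
have [m hm] := NN_nat dq.
have m0 : m != 0%N by apply/eqP => em; have := NN_gt0 dq d0; rewrite hm em ltxx.
case: (eqVneq m 1%N) => [m1|m1].
  apply: min0; apply: (@Gen_unit I p0 dq (bstar dq)) => //.
  by rewrite bstar_th hm m1.
have m2 : (2 <= m)%N by case: m m0 m1 {hm} => [|[|m]].
have [h1e h3e] := n_epoly; have [h1i h3i] := n_einv.
have c1 := min0 _ (@Gen_unit I p0 epoly einv hI G0 _).
have c2 := min0 _ (@Gen_unit I p0 einv epoly hI G0 _).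
rewrite epoly_th einv_th in c1 c2.
have hu : (cc + 1) * (cc - 1) = 1.
  by apply: (@ring_mod cc _ _ 1); [exact: cc2 | ring].
have := c1 hu; have := c2 (etrans (mulrC _ _) hu).
rewrite /SS !n1M !n3M h1e h3e h1i h3i => c2' c1'.
apply: (@ineq _ _ _ _ cc) => //; rewrite ?n1_ge0 ?n3_ge0 ?cc2 //.
by rewrite -/(NN dq) hm ler_nat.
Qed.
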